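(* Assume the setting below, but suppose only that $Y_i(0)\le 0$ for all $i=1,\dots,N$ (rather than $Y_i(0)=0$). Then the following conclusions remain true. (i) For every $1\le k\le N$ and $c\in\mathbb{R}$, $p^{\mathrm H}_{k,c}=G_{\mathrm H}(n(c);N,N-k,N_1)$ satisfies $\Pr(p^{\mathrm H}_{k,c}\le\alpha)\le\alpha$ for all $\alpha\in(0,1)$ whenever $\tau_{(k)}\le c$. (ii) $p^{\mathrm H}_{k,c}$ is non-decreasing in $c$ and non-increasing in $k$. The set $\{c: p^{\mathrm H}_{k,c}>\alpha\}$ equals $[y_{(k(\alpha))},\infty)$, where $k(\alpha)=N_1-Q_{\mathrm H}(1-\alpha;N,N-k,N_1)$, and $\Pr(\tau_{(k)}\ge y_{(k(\alpha))})\ge1-\alpha$. The set $\{N-k:p^{\mathrm H}_{k,c}>\alpha,\ 0\le k\le N\}=\{n_{c,\alpha},\dots,N\}$, where $n_{c,\alpha}=N-\max\{k:G_{\mathrm H}(n(c);N,N-k,N_1)>\alpha,\ 0\le k\le N\}$, and this set contains $N(c)$ with probability at least $1-\alpha$. (iii) For $1\le k_1\le\dots\le k_J\le N$ and $k_j(\alpha)=N_1-Q_{\mathrm H}(1-\alpha;N,N-k_j,N_1)$, $$\Pr\Big(\bigcap_{j=1}^J\{\tau_{(k_j)}\ge y_{(k_j(\alpha))}\}\Big)\ge 1-\Pr\Big(\bigcup_{j=1}^J\Big\{\sum_{i=1}^N Z_i\mathbb{1}(i>k_j)>Q_{\mathrm H}(1-\alpha;N,N-k_j,N_1)\Big\}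\Big).$$
   Context: Setting: - There are $N$ units with fixed potential outcomes $Y_i(1),Y_i(0)$ and ITE $\tau_i=Y_i(1)-Y_i(0)$. - The sorted ITEs are $\tau_{(1)}\le\dots\le\tau_{(N)}$. - CRE: the assignment vector $Z\in\{0,1\}^N$ is uniformly distributed over vectors with exactly $N_1$ ones, where $1\le N_1<N$. - The observed outcome is $Y_i=Z_iY_i(1)+(1-Z_i)Y_i(0)$. - $N(c)=\sum_i\mathbb{1}(\tau_i>c)$ and $n(c)=\sum_iZ_i\mathbb{1}(Y_i>c)$. - $G_{\mathrm H}(x;N,n,N_1)=\Pr(X\ge x)$ and $Q_{\mathrm H}(\theta;N,n,N_1)=\inf\{x:\Pr(X\le x)\ge\theta\}$, for $X$ Hypergeometric with parameters $(N,n,N_1)$ (population size $N$, $n$ marked items, sample size $N_1$). - $y_{(1)}\le\dots\le y_{(N_1)}$ are the sorted observed outcomes of the treated units, with $y_{(0)}=-\infty$. *)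

(* Defs.v *)
From HB Require Import structures.
From mathcomp Require Import all_boot all_order all_algebra.
From mathcomp Require Import reals constructive_ereal.
Set Implicit Arguments. Unset Strict Implicit. Unset Printing Implicit Defensive.
Import Order.TTheory GRing.Theory Num.Theory.
Local Open Scope ring_scope.

Section Defs.
Variable R : realType.

(* ---------- Hypergeometric(N, n, N1): population N, n marked, sample N1 ---------- *)
Definition hpmf (N n N1 x : nat) : R :=
  if (x <= N1)%N then ('C(n, x) * 'C(N - n, N1 - x))%:R / 'C(N, N1)%:R else 0.

Definition GH (x N n N1 : nat) : R := \sum_(x <= j < N1.+1) hpmf N n N1 j.

Definition Hcdf (x N n N1 : nat) : R := \sum_(0 <= j < x.+1) hpmf N n N1 j.

(* Q_H(theta; N, n, N1) = inf {x : Pr(X <= x) >= theta}; for 0 < theta <= 1 this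
   infimum is the least natural number x (necessarily <= N1) with cdf >= theta. *)
Definition QH (theta : R) (N n N1 : nat) : nat :=
  find (fun x => theta <= Hcdf x N n N1) (iota 0 N1.+1).

(* An assignment Z is identified with the set of treated units; Z is uniform on
   the sets of size N1.  Probability of an event E : *)
Definition Pr (N N1 : nat) (E : pred {set 'I_N}) : R :=
  #|[set Z : {set 'I_N} | (#|Z| == N1) && E Z]|%:R / 'C(N, N1)%:R.

Definition ite (N : nat) (Y1 Y0 : 'I_N -> R) (i : 'I_N) : R := Y1 i - Y0 i.

(* k-th smallest ITE tau_(k), 1 <= k <= N *)
Definition tau_ord (N : nat) (Y1 Y0 : 'I_N -> R) (k : nat) : R :=
  nth 0 (sort <=%R [seq ite Y1 Y0 i | i <- enum 'I_N]) k.-1.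

Definition Yobs (N : nat) (Y1 Y0 : 'I_N -> R) (Z : {set 'I_N}) (i : 'I_N) : R :=
  if i \in Z then Y1 i else Y0 i.

Definition Ncount (N : nat) (Y1 Y0 : 'I_N -> R) (c : R) : nat :=
  #|[set i | c < ite Y1 Y0 i]|.

Definition ncount (N : nat) (Y1 Y0 : 'I_N -> R) (Z : {set 'I_N}) (c : R) : nat :=
  #|[set i | (i \in Z) && (c < Yobs Y1 Y0 Z i)]|.

Definition y_ord (N : nat) (Y1 Y0 : 'I_N -> R) (Z : {set 'I_N}) (j : nat) : \bar R :=
  if j == 0%N then -oo%E
  else (nth 0 (sort <=%R [seq Yobs Y1 Y0 Z i | i in Z]) j.-1)%:E.

Definition pH (N N1 : nat) (Y1 Y0 : 'I_N -> R) (Z : {set 'I_N}) (k : nat) (c : R) : R :=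
  GH (ncount Y1 Y0 Z c) N (N - k) N1.

Definition kalpha (N N1 k : nat) (alpha : R) : nat :=
  (N1 - QH (1 - alpha) N (N - k) N1)%N.

Definition pset (N N1 : nat) (Y1 Y0 : 'I_N -> R) (Z : {set 'I_N}) (c alpha : R) : pred nat :=
  fun m => [exists k : 'I_N.+1, (m == N - k)%N && (alpha < pH N1 Y1 Y0 Z k c)%R].

(* n_{c,alpha} = N - max{k : G_H(n(c); N, N-k, N1) > alpha, 0 <= k <= N}
   (k = 0 always belongs to this set, so the max over nat with default 0 is exact) *)
Definition n_ca (N N1 : nat) (Y1 Y0 : 'I_N -> R) (Z : {set 'I_N}) (c alpha : R) : nat :=
  (N - \max_(k < N.+1 | (alpha < GH (ncount Y1 Y0 Z c) N (N - k) N1)%R) k)%N.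

End Defs.

(* Main.v *)
Require Import Defs.
From HB Require Import structures.
From mathcomp Require Import all_boot all_order all_algebra.
From mathcomp Require Import reals constructive_ereal.
From mathcomp Require Import zify ring lra.
Set Implicit Arguments. Unset Strict Implicit. Unset Printing Implicit Defensive.
Import Order.TTheory GRing.Theory Num.Theory.
Local Open Scope ring_scope.

Section Aux.
Variable R : realType.
Variables N N1 : nat.
Hypothesis hN1 : (N1 <= N)%N.

Definition cnt (E : pred {set 'I_N}) := #|[set Z : {set 'I_N} | (#|Z| == N1) && E Z]|.

Lemma PrE (E : pred {set 'I_N}) : Pr R N1 E = (cnt E)%:R / ('C(N, N1)%:R).
Proof. by []. Qed.

Lemma C_gt0 : 0 < ('C(N, N1)%:R : R).
Proof. by rewrite ltr0n bin_gt0. Qed.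

Lemma cnt_all : cnt predT = 'C(N, N1).
Proof.
rewrite /cnt -[in RHS](card_ord N) -card_draws; apply: eq_card => Z.
by rewrite !inE andbT.
Qed.

Lemma cnt_compl (E : pred {set 'I_N}) : (cnt E + cnt (predC E))%N = 'C(N, N1).
Proof.
rewrite -cnt_all.
have -> : cnt predT = #|[set Z : {set 'I_N} | (#|Z| == N1)]| by apply: eq_card => Z; rewrite !inE andbT.
rewrite /cnt -(cardsID [set Z : {set 'I_N} | E Z] [set Z : {set 'I_N} | (#|Z| == N1)]).
congr (_ + _)%N; apply: eq_card => Z; rewrite !inE /=.
  by rewrite andbC.
by rewrite andbC.
Qed.

Lemma Pr_compl (E : pred {set 'I_N}) : Pr R N1 E + Pr R N1 (predC E) = 1.
Proof.
rewrite !PrE -mulrDl -natrD cnt_compl mulfV //.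
by rewrite gt_eqF // C_gt0.
Qed.

Lemma Pr_le (E F : pred {set 'I_N}) :
  (forall Z : {set 'I_N}, #|Z| = N1 -> E Z -> F Z) -> Pr R N1 E <= Pr R N1 F.
Proof.
move=> H; rewrite !PrE ler_wpM2r ?invr_ge0 ?ler0n // ler_nat.
apply: subset_leq_card; apply/subsetP => Z; rewrite !inE => /andP[/eqP h1 h2].
by rewrite h1 eqxx /= H.
Qed.

Lemma Pr_ge0 (E : pred {set 'I_N}) : 0 <= Pr R N1 E.
Proof. by rewrite PrE divr_ge0 ?ler0n. Qed.

Lemma Pr_one (E : pred {set 'I_N}) :
  (forall Z : {set 'I_N}, #|Z| = N1 -> E Z) -> Pr R N1 E = 1.
Proof.
move=> H; rewrite PrE.
have -> : cnt E = cnt predT.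
  apply: eq_card => Z; rewrite !inE /= andbT.
  by case: eqP => //= /H ->.
by rewrite cnt_all mulfV // gt_eqF // C_gt0.
Qed.

Lemma cnt_hyp (S : {set 'I_N}) j :
  cnt (fun Z => #|Z :&: S| == j) =
  if (j <= N1)%N then ('C(#|S|, j) * 'C(N - #|S|, N1 - j))%N else 0%N.
Proof.
case: ifP => hj; last first.
  apply: eq_card0 => Z; rewrite !inE; apply/negP => /andP[/eqP hZ /eqP hj'].
  have := subset_leq_card (subsetIl Z S); rewrite hZ hj' => h.
  by move: hj; rewrite h.
pose DA := [set A : {set 'I_N} | (A \subset S) && (#|A| == j)].
pose DB := [set B : {set 'I_N} | (B \subset ~: S) && (#|B| == (N1 - j)%N)].
have cDA : #|DA| = 'C(#|S|, j) by rewrite /DA cards_draws.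
have cDB : #|DB| = 'C(N - #|S|, N1 - j)
  by rewrite /DB cards_draws cardsCs setCK card_ord.
rewrite /cnt -cDA -cDB -cardsX.
have -> : [set Z : {set 'I_N} | (#|Z| == N1) && (#|Z :&: S| == j)]
        = (fun p => p.1 :|: p.2) @: setX DA DB.
  apply/setP => Z; rewrite !inE; apply/idP/imsetP.
  - move=> /andP[/eqP hZ /eqP hj'].
    exists (Z :&: S, Z :\: S); last by rewrite /= setID.
    rewrite inE /DA /DB !inE /= subsetIr hj' eqxx /=.
    rewrite cardsD hZ hj' eqxx andbT.
    by apply/subsetP => x; rewrite !inE => /andP[].
  - case=> [[A B]]; rewrite inE /DA /DB !inE /= => /andP[/andP[hA /eqP cA] /andP[hB /eqP cB]] ->.
    have dis : [disjoint A & B].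
      apply/pred0P => x /=; apply/negP => /andP[xa xb].
      by move: (subsetP hA x xa) (subsetP hB x xb); rewrite inE => ->.
    rewrite cardsU.
    have -> : A :&: B = set0 by apply/setP => x; rewrite !inE; move: (pred0P dis x) => /= ->.
    rewrite cards0 subn0 cA cB subnKC // eqxx /=.
    have -> : (A :|: B) :&: S = A.
      apply/setP => x; rewrite !inE; case xa: (x \in A); first by rewrite (subsetP hA).
      by case xb: (x \in B) => //=; move: (subsetP hB x xb); rewrite inE => /negbTE ->.
    by rewrite cA.
rewrite card_in_imset //.
move=> [A B] [A' B']; rewrite /DA /DB !inE /=.
move=> /andP[/andP[hA _] /andP[hB _]] /andP[/andP[hA' _] /andP[hB' _]] heq.
have eA : forall X Y : {set 'I_N}, X \subset S -> Y \subset ~: S -> (X :|: Y) :&: S = X.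
  move=> X Y hX hY; apply/setP => x; rewrite !inE; case xa: (x \in X); first by rewrite (subsetP hX).
  by case xb: (x \in Y) => //=; move: (subsetP hY x xb); rewrite inE => /negbTE ->.
have eB : forall X Y : {set 'I_N}, X \subset S -> Y \subset ~: S -> (X :|: Y) :&: ~: S = Y.
  move=> X Y hX hY; apply/setP => x; rewrite !inE; case xb: (x \in Y).
    by rewrite orbT /=; move: (subsetP hY x xb); rewrite inE.
  by rewrite orbF; case xa: (x \in X) => //=; rewrite (subsetP hX).
have := eA A B hA hB; have := eB A B hA hB; rewrite heq eA // eB // => -> -> //.
Qed.

Lemma hpmfE (S : {set 'I_N}) j :
  hpmf R N #|S| N1 j = Pr R N1 (fun Z => #|Z :&: S| == j).
Proof.
by rewrite PrE cnt_hyp /hpmf; case: ifP => //; rewrite mul0r.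
Qed.

Lemma sum_cnt (P : pred {set 'I_N}) (f : {set 'I_N} -> nat) a b :
  (\sum_(a <= j < b) #|[set Z | P Z && (f Z == j)]|)%N =
  #|[set Z | P Z && (a <= f Z < b)%N]|.
Proof.
elim: b => [|b IH].
  rewrite big_geq // ; apply/esym/eq_card0 => Z; rewrite !inE.
  by rewrite ltn0 !andbF.
case: (leqP a b) => hab; last first.
  rewrite big_geq //; apply/esym/eq_card0 => Z; rewrite !inE.
  apply/negP => /andP[_ /andP[h1 h2]]; lia.
rewrite big_nat_recr //= IH.
have -> : #|[set Z | P Z && (a <= f Z < b.+1)%N]| =
   #|[set Z | P Z && (a <= f Z < b)%N] :|: [set Z | P Z && (f Z == b)]|.
  apply: eq_card => Z; rewrite !inE.
  case: (P Z) => //=; apply/idP/idP; [move=> h; apply/orP; lia | move=> /orP[|]; lia].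
rewrite cardsU.
have -> : #|[set Z | P Z && (a <= f Z < b)%N] :&: [set Z | P Z && (f Z == b)]| = 0%N.
  apply: eq_card0 => Z; rewrite !inE; apply/negP => /andP[/andP[_ h1] /andP[_ h2]]; lia.
by rewrite subn0.
Qed.

Lemma cardI_le (Z S : {set 'I_N}) : (#|Z :&: S| <= #|Z|)%N.
Proof. exact/subset_leq_card/subsetIl. Qed.

Lemma GHE (S : {set 'I_N}) x :
  GH R x N #|S| N1 = Pr R N1 (fun Z => (x <= #|Z :&: S|)%N).
Proof.
rewrite /GH (eq_bigr (fun j => (cnt (fun Z => #|Z :&: S| == j))%:R / ('C(N, N1)%:R : R))); last first.
  by move=> j _; rewrite hpmfE.
rewrite -mulr_suml -natr_sum /cnt sum_cnt PrE /cnt; congr (_%:R / _).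
apply: eq_card => Z; rewrite !inE; case: eqP => //= hZ.
by have := cardI_le Z S; rewrite hZ => h; rewrite ltnS h andbT.
Qed.

Lemma HcdfE (S : {set 'I_N}) x :
  Hcdf R x N #|S| N1 = Pr R N1 (fun Z => (#|Z :&: S| <= x)%N).
Proof.
rewrite /Hcdf (eq_bigr (fun j => (cnt (fun Z => #|Z :&: S| == j))%:R / ('C(N, N1)%:R : R))); last first.
  by move=> j _; rewrite hpmfE.
rewrite -mulr_suml -natr_sum /cnt sum_cnt PrE /cnt; by congr (_%:R / _); apply: eq_card => Z; rewrite !inE ltnS.
Qed.

Definition Sm (m : nat) : {set 'I_N} := [set i : 'I_N | (i < m)%N].

Lemma count_enum (T : finType) (A : {pred T}) (p : pred T) :
  count p (enum A) = #|[set x | (x \in A) && p x]|.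
Proof.
rewrite cardE -size_filter; apply/perm_size/uniq_perm.
- by rewrite filter_uniq // enum_uniq.
- exact: enum_uniq.
- by move=> x; rewrite mem_filter !mem_enum !inE andbC.
Qed.

Lemma card_Sm m : (m <= N)%N -> #|Sm m| = m.
Proof.
move=> hm.
have -> : #|Sm m| = count (fun i : 'I_N => (i < m)%N) (enum 'I_N).
  by rewrite count_enum; apply: eq_card => i; rewrite !inE.
rewrite -(count_map val (fun i => (i < m)%N)) val_enum_ord -size_filter.
by rewrite (filter_iota_ltn 0 hm) size_iota.
Qed.

Lemma GHm x m : (m <= N)%N -> GH R x N m N1 = Pr R N1 (fun Z => (x <= #|Z :&: Sm m|)%N).
Proof. by move=> hm; rewrite -GHE card_Sm. Qed.

Lemma Hcdfm x m : (m <= N)%N -> Hcdf R x N m N1 = Pr R N1 (fun Z => (#|Z :&: Sm m| <= x)%N).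
Proof. by move=> hm; rewrite -HcdfE card_Sm. Qed.

Lemma GH_monox x y m : (x <= y)%N -> (m <= N)%N -> GH R y N m N1 <= GH R x N m N1.
Proof.
move=> hxy hm; rewrite !GHm //; apply: Pr_le => Z _ h; exact: leq_trans h.
Qed.

Lemma GH_monom x m m' : (m <= m')%N -> (m' <= N)%N -> GH R x N m N1 <= GH R x N m' N1.
Proof.
move=> hmm hm; rewrite !GHm //; last exact: leq_trans hm.
apply: Pr_le => Z _ h; apply: (leq_trans h); apply/subset_leq_card/setIS.
by apply/subsetP => i; rewrite !inE => h'; exact: leq_trans h' hmm.
Qed.

Lemma GH_valid (S : {set 'I_N}) (alpha : R) : 0 < alpha ->
  Pr R N1 (fun Z => GH R #|Z :&: S| N #|S| N1 <= alpha) <= alpha.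
Proof.
move=> ha.
have ex : exists x, GH R x N #|S| N1 <= alpha.
  exists N1.+1; rewrite /GH big_geq //; exact: ltW.
case: (ex_minnP ex) => x hx hmin.
apply: (le_trans _ hx); rewrite GHE; apply: Pr_le => Z _ h; exact: hmin.
Qed.

Lemma Pr_ext (E F : pred {set 'I_N}) : (forall Z, E Z = F Z) -> Pr R N1 E = Pr R N1 F.
Proof. by move=> H; rewrite !PrE /cnt; congr (_%:R / _); apply: eq_card => Z; rewrite !inE H. Qed.

Lemma QH_spec (n m : nat) (alpha : R) : (m <= N)%N -> 0 < alpha < 1 ->
  (alpha < GH R n N m N1) = (n <= QH (1 - alpha) N m N1)%N.
Proof.
move=> hm /andP[ha0 ha1].
set p := fun x => 1 - alpha <= Hcdf R x N m N1.
have H1 : forall x, (N1 <= x)%N -> Hcdf R x N m N1 = 1.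
  move=> x hx; rewrite Hcdfm //; apply: Pr_one => Z hZ.
  by apply: leq_trans (cardI_le _ _) _; rewrite hZ.
have hasp : has p (iota 0 N1.+1).
  apply/hasP; exists N1; first by rewrite mem_iota; lia.
  by rewrite /p H1 // lerBlDr lerDl ltW.
have hQ : (QH (1 - alpha) N m N1 < N1.+1)%N.
  by rewrite /QH -[X in (_ < X)%N](size_iota 0) -has_find.
have pQ : p (QH (1 - alpha) N m N1).
  have := nth_find 0%N hasp; rewrite nth_iota //.
have bef : forall x, (x < QH (1 - alpha) N m N1)%N -> p x = false.
  move=> x hx; have := before_find 0%N hx; rewrite nth_iota //; exact: ltn_trans hQ.
have Hmono : forall x y, (x <= y)%N -> Hcdf R x N m N1 <= Hcdf R y N m N1.
  move=> x y hxy; rewrite !Hcdfm //; apply: Pr_le => Z _ h; exact: leq_trans h hxy.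
case: n => [|n].
  rewrite GHm // (@Pr_one (fun Z => (0 <= #|Z :&: Sm m|)%N)) //.
have -> : GH R n.+1 N m N1 = 1 - Hcdf R n N m N1.
  rewrite GHm // Hcdfm //.
  have -> : Pr R N1 (fun Z => (#|Z :&: Sm m| <= n)%N) = Pr R N1 (predC (fun Z => (n < #|Z :&: Sm m|)%N)).
    by apply: Pr_ext => Z /=; rewrite leqNgt.
  by rewrite -(Pr_compl (fun Z => (n < #|Z :&: Sm m|)%N)) addrK.
case: (ltnP n (QH (1 - alpha) N m N1)) => h.
  have := bef _ h; rewrite /p => /negbT; rewrite -ltNge => h'.
  by apply/idP; lra.
apply/negbTE; rewrite -leNgt.
have := le_trans pQ (Hmono _ _ h); rewrite /p; lra.
Qed.

End Aux.

Lemma sorted_count (R : realType) (s : seq R) (t : nat) (c : R) :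
  sorted <=%R s -> (1 <= t <= size s)%N ->
  (nth 0 s t.-1 <= c) = (count (fun y => (c < y)%R) s <= size s - t)%N.
Proof.
move=> hs /andP[ht1 ht2].
case: t ht1 ht2 => // t _ ht2 /=.
have hle : forall i j, (i <= j)%N -> (j < size s)%N -> nth 0 s i <= nth 0 s j.
  move=> i j hij hj; apply: (sorted_leq_nth le_trans lexx 0 hs) => //; rewrite inE //.
  exact: leq_ltn_trans hij hj.
apply/idP/idP.
- move=> hc; rewrite -(cat_take_drop t.+1 s) count_cat.
  have -> : count (fun y => (c < y)%R) (take t.+1 s) = 0%N.
    rewrite (@eq_in_count _ _ pred0) ?count_pred0 // => y /(nthP 0) [i hi <-].
    rewrite size_take in hi; rewrite nth_take; last by move: hi; case: ifP => //; lia.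
    apply/negbTE; rewrite -leNgt; apply: le_trans hc; apply: hle; move: hi; case: ifP; lia.
  by rewrite add0n cat_take_drop (leq_trans (count_size _ _)) // size_drop.
- move=> hcnt; rewrite leNgt; apply/negP => hlt.
  have hd : count (fun y => (c < y)%R) (drop t s) = size (drop t s).
    rewrite (@eq_in_count _ _ predT) ?count_predT // => y /(nthP 0) [i hi <-].
    rewrite size_drop in hi; rewrite nth_drop /=.
    apply: lt_le_trans hlt _; apply: hle; [lia | move: hi; rewrite ltn_subRL; by []].
  have : (count (fun y => (c < y)%R) (drop t s) <= count (fun y => (c < y)%R) s)%N.
    by rewrite -{2}(cat_take_drop t s) count_cat leq_addl.
  rewrite hd size_drop => h; have := leq_trans h hcnt; lia.
Qed.

Section Main.
Variable R : realType.
Variables N N1 : nat.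
Hypothesis hN1 : (N1 <= N)%N.
Variables Y1 Y0 : 'I_N -> R.

Lemma ncount_count (Z : {set 'I_N}) c :
  ncount Y1 Y0 Z c = count (fun y => (c < y)%R) (sort <=%R [seq Yobs Y1 Y0 Z i | i in Z]).
Proof.
rewrite count_sort count_map count_enum /ncount; apply: eq_card => i; by rewrite !inE.
Qed.

Lemma size_yseq (Z : {set 'I_N}) :
  size (sort <=%R [seq Yobs Y1 Y0 Z i | i in Z]) = #|Z|.
Proof. by rewrite size_sort size_map -cardE. Qed.

Lemma ncount_le (Z : {set 'I_N}) c : (ncount Y1 Y0 Z c <= #|Z|)%N.
Proof. by apply/subset_leq_card/subsetP => i; rewrite inE => /andP[]. Qed.

Lemma yord_equiv (Z : {set 'I_N}) (Q : nat) (c : R) : #|Z| = N1 -> (Q <= N1)%N ->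
  (y_ord Y1 Y0 Z (N1 - Q) <= c%:E)%E = (ncount Y1 Y0 Z c <= Q)%N.
Proof.
move=> hZ hQ; rewrite /y_ord; case: eqP => ht.
  rewrite leNye; apply/esym; apply: leq_trans (ncount_le _ _) _; rewrite hZ; lia.
rewrite lee_fin sorted_count.
- by rewrite ncount_count size_yseq hZ; congr (_ <= _)%N; lia.
- exact: sort_sorted le_total _.
- rewrite size_yseq hZ; apply/andP; split; lia.
Qed.

Lemma QH_lt (m : nat) (alpha : R) : (m <= N)%N -> 0 < alpha ->
  (QH (1 - alpha) N m N1 <= N1)%N.
Proof.
move=> hm ha.
have hasp : has (fun x => 1 - alpha <= Hcdf R x N m N1) (iota 0 N1.+1).
  apply/hasP; exists N1; first by rewrite mem_iota; lia.
  rewrite Hcdfm // (@Pr_one R N N1 hN1) //; first by rewrite lerBlDr lerDl ltW.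
  move=> Z hZ; apply: leq_trans (cardI_le _ _) _; by rewrite hZ.
by rewrite -ltnS /QH -[X in (_ < X)%N](size_iota 0) -has_find.
Qed.

Lemma part3 (Z : {set 'I_N}) (m : nat) (alpha c : R) : #|Z| = N1 -> (m <= N)%N -> 0 < alpha < 1 ->
  (alpha < GH R (ncount Y1 Y0 Z c) N m N1) =
  (y_ord Y1 Y0 Z (N1 - QH (1 - alpha) N m N1) <= c%:E)%E.
Proof.
move=> hZ hm ha; rewrite (QH_spec hN1) // yord_equiv //.
by apply: QH_lt => //; case/andP: ha.
Qed.

Lemma ncount_S (Z : {set 'I_N}) c : (forall i, Y0 i <= 0) ->
  (ncount Y1 Y0 Z c <= #|Z :&: [set i | (c < ite Y1 Y0 i)%R]|)%N.
Proof.
move=> hY0; apply/subset_leq_card/subsetP => i; rewrite !inE /Yobs => /andP[iZ].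
rewrite iZ /= /ite => h.
by have := hY0 i; lra.
Qed.

Lemma Ncount_le c : (Ncount Y1 Y0 c <= N)%N.
Proof. by rewrite /Ncount -[X in (_ <= X)%N]card_ord max_card. Qed.

Lemma tau_count k c : (1 <= k <= N)%N -> tau_ord Y1 Y0 k <= c ->
  (Ncount Y1 Y0 c <= N - k)%N.
Proof.
move=> hk; rewrite /tau_ord sorted_count; last first.
- by rewrite size_sort size_map size_enum_ord.
- exact: sort_sorted le_total _.
rewrite size_sort size_map size_enum_ord count_sort count_map count_enum.
move=> h; apply: leq_trans h; rewrite /Ncount; apply/subset_leq_card/subsetP => i.
by rewrite !inE.
Qed.

Lemma part1 (k : nat) (c : R) : (forall i, Y0 i <= 0) -> (1 <= k <= N)%N ->
  tau_ord Y1 Y0 k <= c -> forall alpha : R, 0 < alpha < 1 ->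
  Pr R N1 (fun Z : {set 'I_N} => pH N1 Y1 Y0 Z k c <= alpha) <= alpha.
Proof.
move=> hY0 hk htau alpha /andP[ha0 ha1].
set S := [set i | c < ite Y1 Y0 i].
apply: le_trans (GH_valid hN1 S ha0).
apply: Pr_le => Z hZ h; rewrite /pH in h.
have hS : (#|S| <= N - k)%N by exact: tau_count.
apply: le_trans h.
have hSN : (#|S| <= N)%N by exact: leq_trans hS (leq_subr _ _).
apply: le_trans (GH_monox R hN1 (ncount_S Z c hY0) hSN) _.
apply: (GH_monom R hN1) => //; exact: leq_subr.
Qed.

Lemma tau_sorted : (forall i j : 'I_N, (i <= j)%N -> ite Y1 Y0 i <= ite Y1 Y0 j) ->
  forall k (hk : (k.-1 < N)%N), tau_ord Y1 Y0 k = ite Y1 Y0 (Ordinal hk).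
Proof.
move=> hs k hk.
have hsrt : sorted <=%R [seq ite Y1 Y0 i | i <- enum 'I_N].
  rewrite sorted_map.
  have h1 : sorted (relpre val leq) (enum 'I_N) by rewrite -sorted_map val_enum_ord iota_sorted.
  by apply: sub_sorted h1 => i j /= h; exact: hs.
rewrite /tau_ord (sorted_sort le_trans hsrt).
rewrite (nth_map (Ordinal hk)) ?size_enum_ord //.
by have := nth_ord_enum (Ordinal hk) (Ordinal hk); rewrite /= => ->.
Qed.

End Main.

Unset Implicit Arguments.
Set Strict Implicit.
Theorem proposition4 (R : realType) (N N1 : nat) (Y1 Y0 : 'I_N -> R)
  (hN1 : (1 <= N1 < N)%N) (hY0 : forall i, Y0 i <= 0) :
  (* (i) validity of p^H_{k,c} *)
  (forall (k : nat) (c : R), (1 <= k <= N)%N -> tau_ord Y1 Y0 k <= c ->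
     forall alpha : R, 0 < alpha < 1 ->
       Pr R N1 (fun Z : {set 'I_N} => pH N1 Y1 Y0 Z k c <= alpha) <= alpha)
  /\
  (* (ii) monotonicity *)
  (forall (Z : {set 'I_N}), #|Z| = N1 ->
     (forall (k : nat) (c1 c2 : R), (k <= N)%N -> c1 <= c2 ->
        pH N1 Y1 Y0 Z k c1 <= pH N1 Y1 Y0 Z k c2) /\
     (forall (k1 k2 : nat) (c : R), (k1 <= k2 <= N)%N ->
        pH N1 Y1 Y0 Z k2 c <= pH N1 Y1 Y0 Z k1 c))
  /\
  (* (ii) {c : p > alpha} = [y_(k(alpha)), oo) *)
  (forall (Z : {set 'I_N}), #|Z| = N1 ->
     forall (k : nat) (alpha c : R), (1 <= k <= N)%N -> 0 < alpha < 1 ->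
       (alpha < pH N1 Y1 Y0 Z k c) = (y_ord Y1 Y0 Z (kalpha N N1 k alpha) <= c%:E)%E)
  /\
  (* (ii) confidence bound for tau_(k) *)
  (forall (k : nat) (alpha : R), (1 <= k <= N)%N -> 0 < alpha < 1 ->
     1 - alpha <= Pr R N1 (fun Z : {set 'I_N} =>
        (y_ord Y1 Y0 Z (kalpha N N1 k alpha) <= (tau_ord Y1 Y0 k)%:E)%E))
  /\
  (* (ii) {N - k : p_{k,c} > alpha, 0 <= k <= N} = {n_{c,alpha}, ..., N} *)
  (forall (Z : {set 'I_N}), #|Z| = N1 ->
     forall (c alpha : R), 0 < alpha < 1 ->
       forall m : nat, pset N1 Y1 Y0 Z c alpha m = (n_ca N1 Y1 Y0 Z c alpha <= m <= N)%N)
  /\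
  (* (ii) that set contains N(c) with probability >= 1 - alpha *)
  (forall (c alpha : R), 0 < alpha < 1 ->
     1 - alpha <= Pr R N1 (fun Z : {set 'I_N} => pset N1 Y1 Y0 Z c alpha (Ncount Y1 Y0 c)))
  /\
  (* (iii) simultaneous bounds; units labelled so that tau_1 <= ... <= tau_N *)
  ((forall i j : 'I_N, (i <= j)%N -> ite Y1 Y0 i <= ite Y1 Y0 j) ->
   forall (J : nat) (kk : 'I_J -> nat) (alpha : R), 0 < alpha < 1 ->
     (forall j, (1 <= kk j <= N)%N) ->
     (forall j1 j2 : 'I_J, (j1 <= j2)%N -> (kk j1 <= kk j2)%N) ->
     1 - Pr R N1 (fun Z : {set 'I_N} => [exists j : 'I_J,
            (QH (1 - alpha) N (N - kk j) N1 < #|[set i in Z | (kk j <= i)%N]|)%N])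
     <= Pr R N1 (fun Z : {set 'I_N} => [forall j : 'I_J,
            (y_ord Y1 Y0 Z (kalpha N N1 (kk j) alpha) <= (tau_ord Y1 Y0 (kk j))%:E)%E])).
Proof.
have hN1' : (N1 <= N)%N by case/andP: hN1 => _ /ltnW.
have P1 := part1 hN1' (Y1:=Y1) (Y0:=Y0).
have P3 : forall (Z : {set 'I_N}), #|Z| = N1 ->
     forall (k : nat) (alpha c : R), (1 <= k <= N)%N -> 0 < alpha < 1 ->
       (alpha < pH N1 Y1 Y0 Z k c) = (y_ord Y1 Y0 Z (kalpha N N1 k alpha) <= c%:E)%E.
  move=> Z hZ k alpha c hk ha; rewrite /pH /kalpha part3 //; exact: leq_subr.
have compl : forall (E : pred {set 'I_N}), Pr R N1 E <= 1 - Pr R N1 (predC E).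
  by move=> E; have := Pr_compl R hN1' E; lra.
split; first by move=> k c hk htau alpha ha; exact: P1.
split.
  move=> Z hZ; split.
    move=> k c1 c2 hk hc; rewrite /pH; apply: (GH_monox R hN1'); last exact: leq_subr.
    apply/subset_leq_card/subsetP => i; rewrite !inE => /andP[-> h] /=.
    exact: le_lt_trans hc h.
  move=> k1 k2 c /andP[h12 h2]; rewrite /pH; apply: (GH_monom R hN1'); last exact: leq_subr.
  exact: leq_sub2l.
split; first exact: P3.
split.
  move=> k alpha hk ha.
  have h1 := P1 k (tau_ord Y1 Y0 k) hY0 hk (lexx _) alpha ha.
  have h2 : Pr R N1 (predC (fun Z : {set 'I_N} => pH N1 Y1 Y0 Z k (tau_ord Y1 Y0 k) <= alpha))
     <= Pr R N1 (fun Z : {set 'I_N} => (y_ord Y1 Y0 Z (kalpha N N1 k alpha) <= (tau_ord Y1 Y0 k)%:E)%E).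
    apply: Pr_le => Z hZ /=; rewrite -ltNge (P3 Z hZ k alpha) //.
  have := Pr_compl R hN1' (fun Z : {set 'I_N} => pH N1 Y1 Y0 Z k (tau_ord Y1 Y0 k) <= alpha).
  lra.
split.
  move=> Z hZ c alpha ha m.
  set P := fun k : 'I_N.+1 => alpha < GH R (ncount Y1 Y0 Z c) N (N - k) N1.
  have P0 : P ord0.
    rewrite /P subn0 GHm // (@Pr_one R N N1 hN1'); first by case/andP: ha.
    move=> Z' hZ'; apply: leq_trans (ncount_le Y1 Y0 Z c) _; rewrite hZ -hZ'.
    apply/subset_leq_card/subsetP => i iZ; rewrite !inE iZ /=; exact: ltn_ord.
  have Pdown : forall k k' : 'I_N.+1, (k' <= k)%N -> P k -> P k'.
    move=> k k' hkk; rewrite /P => h; apply: lt_le_trans h _.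
    apply: (GH_monom R hN1'); [exact: leq_sub2l | exact: leq_subr].
  have hpos : (0 < #|P|)%N by apply/card_gt0P; exists ord0.
  have [i0 hi0 heq] := @eq_bigmax_cond _ P (fun k : 'I_N.+1 => nat_of_ord k) hpos.
  have hK : \max_(k < N.+1 | (alpha < GH R (ncount Y1 Y0 Z c) N (N - k) N1)) k = i0 by rewrite -heq.
  rewrite /pset /n_ca hK /pH -/P.
  have hP : forall k : 'I_N.+1, P k = (k <= i0)%N.
    move=> k; apply/idP/idP => h.
      by rewrite -hK; exact: (@leq_bigmax_cond _ P (fun k : 'I_N.+1 => nat_of_ord k) k h).
    exact: Pdown h hi0.
  apply/existsP/idP.
    case=> k /andP[/eqP -> hk]; have hk' : P k := hk; rewrite hP in hk'; have := ltn_ord k; lia.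
  move=> h; have hm : (N - m < N.+1)%N by lia.
  exists (Ordinal hm); apply/andP; split; first by apply/eqP; rewrite /=; lia.
  have : P (Ordinal hm) by rewrite hP /=; have := ltn_ord i0; lia.
  by [].
split.
  move=> c alpha /andP[ha0 ha1].
  set S := [set i | c < ite Y1 Y0 i].
  have h1 := GH_valid hN1' S ha0.
  have hNc : Ncount Y1 Y0 c = #|S| by [].
  have hk : (N - Ncount Y1 Y0 c < N.+1)%N by rewrite ltnS leq_subr.
  apply: le_trans (_ : Pr R N1 (predC (fun Z : {set 'I_N} => GH R #|Z :&: S| N #|S| N1 <= alpha)) <= _).
    have := Pr_compl R hN1' (fun Z : {set 'I_N} => GH R #|Z :&: S| N #|S| N1 <= alpha); lra.
  apply: Pr_le => Z hZ /=; rewrite -ltNge => h.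
  apply/existsP; exists (Ordinal hk); apply/andP; split.
    by apply/eqP; rewrite /=; have := Ncount_le Y1 Y0 c; lia.
  rewrite /pH /=.
  have -> : (N - (N - Ncount Y1 Y0 c))%N = #|S| by have := Ncount_le Y1 Y0 c; rewrite hNc; lia.
  apply: lt_le_trans h _.
  apply: (GH_monox R hN1'); first exact: ncount_S.
  by rewrite -hNc; exact: Ncount_le.
move=> hs J kk alpha ha hk hmono.
set E := (fun Z : {set 'I_N} => [exists j : 'I_J,
            (QH (1 - alpha) N (N - kk j) N1 < #|[set i in Z | (kk j <= i)%N]|)%N]).
have := Pr_compl R hN1' E.
suff : Pr R N1 (predC E) <= Pr R N1 (fun Z : {set 'I_N} => [forall j : 'I_J,
            (y_ord Y1 Y0 Z (kalpha N N1 (kk j) alpha) <= (tau_ord Y1 Y0 (kk j))%:E)%E]) by lra.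
apply: Pr_le => Z hZ /=; rewrite /E negb_exists => /forallP hj.
apply/forallP => j; have := hj j; rewrite -leqNgt => hQ.
have hkj : ((kk j).-1 < N)%N by have := hk j; lia.
rewrite /kalpha yord_equiv //; last by apply: QH_lt => //; [exact: leq_subr | case/andP: ha].
apply: (leq_trans _ hQ); rewrite (tau_sorted hs hkj).
apply/subset_leq_card/subsetP => i; rewrite !inE /Yobs => /andP[iZ].
rewrite iZ /= => h; rewrite leqNgt; apply/negP => hlt.
have hik : (i <= Ordinal hkj)%N.
  rewrite /=; move: hlt; case: (kk j) => // n; by rewrite ltnS.
have h3 := hs _ _ hik; have h4 := hY0 i; move: h3 h4 h; rewrite /ite.
clear -R; move=> h3 h4 h; lra.
Qed.
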